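(* Let $C=L_1;\ldots;L_D$ be a sorting network on $n$ channels containing no redundant comparators, and suppose that $C$ contains a comparator $(i,j)$ in layer $L_d$ with $j>i+1$. Then at least one of the channels $i$ and $j$ is used in some layer $L_{d'}$ with $d'>d$.
   Context: Channels are numbered $1,\ldots,n$. A comparator network is a sequence $C=L_1;\ldots;L_D$ of layers; each layer is a set of comparators $(i,j)$ with $1\le i<j\le n$, each channel occurring in at most one comparator of a layer. An input $\bar x\in\{0,1\}^n$ propagates: $\bar x_0=\bar x$, and $\bar x_k$ is obtained from $\bar x_{k-1}$ by, for each $(i,j)\in L_k$, putting the minimum of the values at positions $i,j$ at position $i$ and the maximum at position $j$. The output is $C(\bar x)=\bar x_D$; $C$ is a sorting network if $C(\bar x)$ is sorted non-decreasingly for all $\bar x\in\{0,1\}^n$. A comparator $(i,j)\in L_\ell$ is redundant if for every input $\bar x$ we have $(\bar x_{\ell-1})_i\le(\bar x_{\ell-1})_j$. A channel is used in layer $L_\ell$ if it occurs in some comparator of $L_\ell$. *)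

(* Defs.v *)
From mathcomp Require Import all_boot.
Set Implicit Arguments. Unset Strict Implicit. Unset Printing Implicit Defensive.

(* Channels 1..n of the paper are represented by 'I_n (0..n-1), shift by one.
   A comparator is a pair (i, j) of channels; a layer is a sequence of
   comparators; a network is a sequence of layers L_1; ...; L_D, with layer
   L_(d+1) of the paper being [nth [::] C d]. Inputs are 0/1 vectors
   'I_n -> bool (false = 0 < true = 1). *)

Definition comparator n := ('I_n * 'I_n)%type.
Definition layer n := seq (comparator n).
Definition network n := seq (layer n).

Definition channels n (L : layer n) : seq 'I_n :=
  flatten [seq [:: c.1; c.2] | c <- L].

Definition wf_layer n (L : layer n) : bool :=
  all (fun c : comparator n => c.1 < c.2) L && uniq (channels L).

Definition wf_network n (C : network n) : bool := all (@wf_layer n) C.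

(* applying a layer to a vector (for well-formed layers this is exactly the
   simultaneous application of all its comparators) *)
Definition apply_layer n (L : layer n) (x : 'I_n -> bool) : 'I_n -> bool :=
  fun k =>
    match [seq c <- L | (c.1 == k) || (c.2 == k)] with
    | c :: _ => if c.1 == k then x c.1 && x c.2 else x c.1 || x c.2
    | [::] => x k
    end.

Definition run_prefix n (C : network n) (d : nat) (x : 'I_n -> bool) :=
  foldl (fun y L => apply_layer L y) x (take d C).

Definition output n (C : network n) (x : 'I_n -> bool) := run_prefix C (size C) x.

Definition sorted_vec n (y : 'I_n -> bool) : bool :=
  [forall i : 'I_n, forall j : 'I_n, (i <= j) ==> (y i <= y j)].

Definition sorting_network n (C : network n) : Prop :=
  wf_network C /\ forall x : 'I_n -> bool, sorted_vec (output C x).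

(* comparator c of layer with 0-based index d (paper's L_(d+1)) is redundant *)
Definition redundant n (C : network n) (d : nat) (c : comparator n) : Prop :=
  forall x : 'I_n -> bool, run_prefix C d x c.1 <= run_prefix C d x c.2.

Definition no_redundant n (C : network n) : Prop :=
  forall d c, d < size C -> c \in nth [::] C d -> ~ redundant C d c.

Definition used_in n (C : network n) (d : nat) (k : 'I_n) : bool :=
  k \in channels (nth [::] C d).

(* Main.v *)
Require Import Defs.
From mathcomp Require Import all_boot zify.
Set Implicit Arguments. Unset Strict Implicit. Unset Printing Implicit Defensive.

Section L.
Variable n : nat.
Implicit Types (L : layer n) (x y : 'I_n -> bool).

Definition hit (k : 'I_n) (c : comparator n) := (c.1 == k) || (c.2 == k).

Lemma channelsP L k : reflect (exists2 c, c \in L & hit k c) (k \in channels L).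
Proof.
elim: L => [|a L IH] /=; first by apply: (iffP idP) => // [[c]].
rewrite /channels /= -/(channels L) !inE.
apply: (iffP idP).
- case/orP=> [/eqP->|]; first by exists a; rewrite ?inE ?eqxx // /hit eqxx.
  case/orP=> [/eqP->|]; first by exists a; rewrite ?inE ?eqxx // /hit eqxx orbT.
  by case/IH=> c cL hc; exists c; rewrite // inE cL orbT.
- case=> c; rewrite inE => /orP [/eqP->|cL] hc.
    by move: hc; rewrite /hit => /orP [/eqP->|/eqP->]; rewrite eqxx ?orbT.
  by apply/orP; right; apply/orP; right; apply/IH; exists c.
Qed.

Lemma hit_uniq L c c' k : wf_layer L -> c \in L -> c' \in L -> hit k c -> hit k c' -> c = c'.
Proof.
elim: L => // a L IH.
rewrite /wf_layer /= /channels /= -/(channels L) => /andP [/andP [_ alL]].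
rewrite /= !inE => /and3P [na1 na2 uL] cin c'in hc hc'.
have wfL : wf_layer L by rewrite /wf_layer alL uL.
have nin : forall d, d \in L -> hit k d -> hit k a -> False.
  move=> d dL hd ha; have kch : k \in channels L by apply/channelsP; exists d.
  move: ha; rewrite /hit => /orP [/eqP E|/eqP E]; rewrite -E in kch.
    by move: na1; rewrite kch orbT.
  by move: na2; rewrite kch.
case/orP: cin => [/eqP Ec|cL]; case/orP: c'in => [/eqP Ec'|c'L].
- by rewrite Ec Ec'.
- by exfalso; apply: (nin c') => //; rewrite -Ec.
- by exfalso; apply: (nin c) => //; rewrite -Ec'.
- exact: IH.
Qed.

Lemma apply_hit L c x k : wf_layer L -> c \in L -> hit k c ->
  apply_layer L x k = if c.1 == k then x c.1 && x c.2 else x c.1 || x c.2.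
Proof.
move=> wf cL hc; rewrite /apply_layer.
have : c \in [seq c <- L | (c.1 == k) || (c.2 == k)] by rewrite mem_filter cL andbT; exact: hc.
case E: [seq c <- L | (c.1 == k) || (c.2 == k)] => [|c' s] //.
have : c' \in [seq c <- L | (c.1 == k) || (c.2 == k)] by rewrite E inE eqxx.
rewrite mem_filter => /andP [hc' c'L] _.
by rewrite (hit_uniq wf c'L cL hc' hc).
Qed.

Lemma apply_nohit L x k : k \notin channels L -> apply_layer L x k = x k.
Proof.
move=> nk; rewrite /apply_layer.
case E: [seq c <- L | (c.1 == k) || (c.2 == k)] => [|c' s] //.
have : c' \in [seq c <- L | (c.1 == k) || (c.2 == k)] by rewrite E inE eqxx.
rewrite mem_filter => /andP [hc' c'L].
by case/negP: nk; apply/channelsP; exists c'.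
Qed.

Lemma wf_lt L c : wf_layer L -> c \in L -> c.1 < c.2.
Proof. by case/andP => /allP H _ /H. Qed.

Lemma apply_c1 L c x : wf_layer L -> c \in L -> apply_layer L x c.1 = x c.1 && x c.2.
Proof. by move=> wf cL; rewrite (apply_hit x wf cL) ?eqxx // /hit eqxx. Qed.

Lemma apply_c2 L c x : wf_layer L -> c \in L -> apply_layer L x c.2 = x c.1 || x c.2.
Proof.
move=> wf cL; rewrite (apply_hit x wf cL); last by rewrite /hit eqxx orbT.
case: eqP => // E; have := wf_lt wf cL; by rewrite E ltnn.
Qed.

Lemma apply_sorted L x : wf_layer L -> sorted_vec x -> forall k, apply_layer L x k = x k.
Proof.
move=> wf /forallP s k.
case: (boolP (k \in channels L)) => [/channelsP [c cL hc]|nk]; last exact: apply_nohit.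
have lt := wf_lt wf cL.
have le : x c.1 <= x c.2 by have := s c.1 => /forallP /(_ c.2) /implyP; apply; apply: ltnW.
move: hc; rewrite /hit => /orP [/eqP <-|/eqP <-].
  by rewrite apply_c1 //; case: (x c.1) le => //; case: (x c.2).
by rewrite apply_c2 //; case: (x c.1) le => //; case: (x c.2).
Qed.

Definition step1 x x' := exists p, x p = false /\ forall k, x' k = (k == p) || x k.

Lemma step1_le x x' : step1 x x' -> forall k, x k <= x' k.
Proof. by case=> p [_ H] k; rewrite H; case: (x k); rewrite ?orbT. Qed.

Lemma apply_step1 L x x' : wf_layer L -> step1 x x' -> step1 (apply_layer L x) (apply_layer L x').
Proof.
move=> wf [p [xp H]].
have same : forall k, k != p -> x' k = x k by move=> k /negbTE kp; rewrite H kp.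
case: (boolP (p \in channels L)) => [/channelsP [c cL hc]|np].
- have lt := wf_lt wf cL.
  have ne : c.1 != c.2 by apply/eqP=> E; rewrite E ltnn in lt.
  have out : forall k, ~~ hit k c -> apply_layer L x' k = apply_layer L x k.
    move=> k nk; case: (boolP (k \in channels L)) => [/channelsP [c' c'L hc']|nkk].
    + have nc : c' != c by apply/eqP=> E; subst c'; by rewrite hc' in nk.
      have n1 : c'.1 != p.
        apply/eqP=> E; move/eqP: nc; apply; apply: (hit_uniq wf c'L cL _ hc); by rewrite /hit E eqxx.
      have n2 : c'.2 != p.
        apply/eqP=> E; move/eqP: nc; apply; apply: (hit_uniq wf c'L cL _ hc); by rewrite /hit E eqxx orbT.
      rewrite !(apply_hit _ wf c'L hc') !same //.
    + rewrite !apply_nohit // same //; apply/eqP=> E; case/negP: nk; by rewrite E.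
  move: hc; rewrite /hit => /orP [/eqP E1|/eqP E2].
  +
    have x2 : x' c.2 = x c.2 by rewrite same // -E1 eq_sym.
    have x1 : x' c.1 = true by rewrite H E1 eqxx.
    rewrite -E1 in xp.
    case X2 : (x c.2).
    * exists c.1; split; first by rewrite apply_c1 // xp.
      move=> k; case: (boolP (hit k c)) => [/orP [/eqP <-|/eqP <-]|nk].
      - by rewrite eqxx apply_c1 // x1 x2 X2.
      - by rewrite eq_sym (negbTE ne) !apply_c2 // x1 x2 X2 !orbT.
      - rewrite out //; case: eqP => // E; case/negP: nk; by rewrite /hit E eqxx.
    * exists c.2; split; first by rewrite apply_c2 // xp X2.
      move=> k; case: (boolP (hit k c)) => [/orP [/eqP <-|/eqP <-]|nk].
      - by rewrite (negbTE ne) !apply_c1 // x2 X2 !andbF.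
      - by rewrite eqxx apply_c2 // x1.
      - rewrite out //; case: eqP => // E; case/negP: nk; by rewrite /hit E eqxx orbT.
  +
    have x1 : x' c.1 = x c.1 by rewrite same // -E2.
    have x2 : x' c.2 = true by rewrite H E2 eqxx.
    rewrite -E2 in xp.
    case X1 : (x c.1).
    * exists c.1; split; first by rewrite apply_c1 // xp andbF.
      move=> k; case: (boolP (hit k c)) => [/orP [/eqP <-|/eqP <-]|nk].
      - by rewrite eqxx apply_c1 // x1 x2 X1.
      - by rewrite eq_sym (negbTE ne) !apply_c2 // x1 X1.
      - rewrite out //; case: eqP => // E; case/negP: nk; by rewrite /hit E eqxx.
    * exists c.2; split; first by rewrite apply_c2 // xp X1.
      move=> k; case: (boolP (hit k c)) => [/orP [/eqP <-|/eqP <-]|nk].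
      - by rewrite (negbTE ne) !apply_c1 // x1 X1.
      - by rewrite eqxx apply_c2 // x2 orbT.
      - rewrite out //; case: eqP => // E; case/negP: nk; by rewrite /hit E eqxx orbT.
- exists p; split; first by rewrite apply_nohit.
  move=> k; case: (boolP (k \in channels L)) => [/channelsP [c cL hc]|nk].
  + have kp : k != p.
      apply/eqP=> E; case/negP: np; apply/channelsP; exists c => //; by rewrite -E.
    have n1 : c.1 != p by apply/eqP=> E; case/negP: np; apply/channelsP; exists c; rewrite // /hit E eqxx.
    have n2 : c.2 != p by apply/eqP=> E; case/negP: np; apply/channelsP; exists c; rewrite // /hit E eqxx orbT.
    by rewrite (negbTE kp) !(apply_hit _ wf cL hc) !same.
  + by rewrite !apply_nohit.
Qed.

End L.
Section A.
Variable n : nat.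


Lemma sortedP (s : 'I_n -> bool) : sorted_vec s -> forall a b : 'I_n, a <= b -> s a <= s b.
Proof. by move=> /forallP H a b ab; have /forallP /(_ b) /implyP := H a; apply. Qed.

Lemma sorted_step (s s' : 'I_n -> bool) p : s p = false -> (forall k, s' k = (k == p) || s k) ->
  sorted_vec s -> sorted_vec s' -> forall k, s k = (p < k) /\ s' k = (p <= k).
Proof.
move=> sp H ss ss' k.
have s'p : s' p = true by rewrite H eqxx.
case: (ltngtP p k) => [pk|kp|pk].
- have : s' p <= s' k by apply: sortedP => //; apply: ltnW.
  rewrite s'p H; have -> : (k == p) = false by apply/eqP=> E; rewrite E ltnn in pk.
  by case: (s k).
- have : s k <= s p by apply: sortedP => //; apply: ltnW.
  rewrite sp H; have -> : (k == p) = false by apply/eqP=> E; rewrite E ltnn in kp.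
  by case: (s k).
- have E : p = k by apply: val_inj.
  by rewrite -E sp s'p.
Qed.

Definition msr (x : 'I_n -> bool) := \sum_(k : 'I_n) x k * k.

Lemma msr_step (a b : 'I_n -> bool) w : a w = false -> (forall k, b k = (k == w) || a k) ->
  msr b = msr a + w.
Proof.
move=> aw H; rewrite /msr (bigD1 w) // [in RHS](bigD1 w) //= aw H eqxx /=.
rewrite (eq_bigr (fun k => a k * k)); first by lia.
by move=> k /negbTE kw; rewrite H kw.
Qed.

Lemma msr_bound x : msr x <= n * n.
Proof.
rewrite /msr; apply: (@leq_trans (\sum_(k : 'I_n) n)).
  by apply: leq_sum => k _; case: (x k); rewrite ?mul1n ?mul0n // ltnW.
by rewrite sum_nat_const card_ord.
Qed.

Variables (Y O : ('I_n -> bool) -> ('I_n -> bool)) (i j : 'I_n).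
Hypothesis hY : forall x x', step1 x x' -> step1 (Y x) (Y x').
Hypothesis hO : forall x x', step1 x x' -> step1 (O x) (O x').
Hypothesis hOs : forall x, sorted_vec (O x).
Hypothesis hOi : forall x, O x i = Y x i && Y x j.
Hypothesis hOj : forall x, O x j = Y x i || Y x j.
Hypothesis hYs : forall s, sorted_vec s -> forall k, Y s k = s k.
Hypothesis hij : i.+1 < j.

Definition P x := Y x i && ~~ Y x j.

Lemma swap_step x p q : P x -> x p = true -> x q = false -> p != q ->
  P (fun k => if k == p then false else (k == q) || x k).
Proof.
move=> Px xp xq npq.
set x'' := (fun k => _).
pose u := fun k => (k != p) && x k.
pose v := fun k => (k == q) || x k.
have ux : step1 u x by exists p; split; [by rewrite /u eqxx | move=> k; rewrite /u; case: eqP => // ->].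
have xv : step1 x v by exists q.
have ux'' : step1 u x''.
  exists q; split; first by rewrite /u xq andbF.
  move=> k; rewrite /x'' /u; case: (eqVneq k p) => [->|kp]; first by rewrite (negbTE npq).
  by [].
have x''v : step1 x'' v.
  exists p; split; first by rewrite /x'' eqxx.
  by move=> k; rewrite /x'' /v; case: (eqVneq k p) => [->|kp] /=; rewrite ?xp ?orbT.
move: Px; rewrite /P => /andP [Yxi /negbTE Yxj].
have Oxi : O x i = false by rewrite hOi Yxi Yxj.
have Oxj : O x j = true by rewrite hOj Yxi.
have [p1 [Oup1 HO1]] := hO ux.
have [p2 [Oxp2 HO2]] := hO xv.
have [p3 [Oup3 HO3]] := hO ux''.
have S1 := sorted_step Oup1 HO1 (hOs u) (hOs x).
have S2 := sorted_step Oxp2 HO2 (hOs x) (hOs v).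
have S3 := sorted_step Oup3 HO3 (hOs u) (hOs x'').
have e13 : nat_of_ord p1 = p3.
  have := (S1 p1).1; rewrite (S3 p1).1 ltnn => h1.
  have := (S1 p3).1; rewrite (S3 p3).1 ltnn => h2.
  have h1' : ~~ (p3 < p1) by rewrite h1.
  have h2' : ~~ (p1 < p3) by rewrite -h2.
  lia.
have Ox''i : O x'' i = false by rewrite (S3 i).2 -e13 -(S1 i).2.
have Ox''j : O x'' j = true by rewrite (S3 j).2 -e13 -(S1 j).2.
have le1 := step1_le (hY ux); have le2 := step1_le (hY xv).
have le3 := step1_le (hY ux''); have le4 := step1_le (hY x''v).
case A : (O u j).
- move: A; rewrite hOj.
  have : Y u j = false by move: (le1 j); rewrite Yxj; case: (Y u j).
  move=> -> ; rewrite orbF => Yui.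
  have Y''i : Y x'' i = true by move: (le3 i); rewrite Yui; case: (Y x'' i).
  by move: Ox''i; rewrite hOi Y''i /= => ->.
case B : (O v i).
- exfalso.
  have h1 : ~~ (p1 < j) by rewrite -(S1 j).1 A.
  have h1' : p1 <= j by rewrite -(S1 j).2.
  have h2 : p2 <= i by rewrite -(S2 i).2.
  have h2' : ~~ (p2 < i) by rewrite -(S2 i).1 Oxi.
  have ltk : i.+1 < n by exact: ltn_trans hij (ltn_ord j).
  pose k := Ordinal ltk.
  have := (S1 k).2; rewrite (S2 k).1 /= => E.
  have E' : p1 <= i.+1 by rewrite -E ltnS.
  by rewrite (leq_ltn_trans E' hij) in h1.
- move: B; rewrite hOi.
  have Yvi : Y v i = true by move: (le2 i); rewrite Yxi; case: (Y v i).
  rewrite Yvi /= => Yvj.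
  have Y''j : Y x'' j = false by move: (le4 j); rewrite Yvj; case: (Y x'' j).
  by move: Ox''j; rewrite hOj Y''j orbF => ->.
Qed.

Lemma no_P : forall x, ~ P x.
Proof.
suff : forall N x, n * n < msr x + N -> ~ P x.
  by move=> H x; apply: (H (n * n).+1); lia.
elim=> [|N IH] x.
  by rewrite addn0 ltnNge msr_bound.
move=> hN Px.
case: (boolP (sorted_vec x)) => [sx|].
  by move: Px; rewrite /P !hYs // => /andP [xi /negbTE xj];
     have := sortedP sx (ltnW (ltnW hij)); rewrite xi xj.
move/forallPn => [p /forallPn [q]]; rewrite negb_imply => /andP [pq].
case Xp : (x p); case Xq : (x q) => // _.
have npq : p != q by apply/eqP=> E; rewrite E Xq in Xp.
have ltpq : p < q by rewrite ltn_neqAle pq andbT; apply: contra npq => /eqP E; apply/eqP/val_inj.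
apply: (IH (fun k => if k == p then false else (k == q) || x k)); last exact: swap_step.
pose u := fun k => (k != p) && x k.
have m1 : msr x = msr u + p.
  apply: msr_step; first by rewrite /u eqxx.
  by move=> k; rewrite /u; case: eqP => // ->.
have m2 : msr (fun k => if k == p then false else (k == q) || x k) = msr u + q.
  apply: msr_step; first by rewrite /u Xq andbF.
  move=> k; rewrite /u; case: (eqVneq k p) => [->|kp]; first by rewrite (negbTE npq).
  by [].
rewrite m2; rewrite m1 in hN; lia.
Qed.

End A.

From Stdlib Require Import Classical FunctionalExtensionality.

Lemma run_S n (C : network n) m x : m < size C ->
  run_prefix C m.+1 x = apply_layer (nth [::] C m) (run_prefix C m x).
Proof. by move=> hm; rewrite /run_prefix (take_nth [::] hm) foldl_rcons. Qed.

Lemma wf_nth n (C : network n) m : wf_network C -> m < size C -> wf_layer (nth [::] C m).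
Proof. by move=> /(all_nthP [::]) H; apply: H. Qed.

Lemma foldl_step1 n (s : seq (layer n)) x x' : all (@wf_layer n) s -> step1 x x' ->
  step1 (foldl (fun y L => apply_layer L y) x s) (foldl (fun y L => apply_layer L y) x' s).
Proof.
elim: s x x' => [|a s IH] x x' //= /andP [wa ws] h.
by apply: IH => //; apply: apply_step1.
Qed.

Lemma foldl_sorted n (s : seq (layer n)) x : all (@wf_layer n) s -> sorted_vec x ->
  foldl (fun y L => apply_layer L y) x s = x.
Proof.
elim: s x => [|a s IH] x //= /andP [wa ws] h.
have -> : apply_layer a x = x by apply: functional_extensionality; apply: apply_sorted.
exact: IH.
Qed.

Lemma all_take_wf n (C : network n) m : wf_network C -> all (@wf_layer n) (take m C).
Proof. by move=> wfC; apply/allP=> L LT; apply: (allP wfC); exact: mem_take LT. Qed.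

Lemma untouched n (C : network n) d k x : 
  (forall d', d < d' < size C -> k \notin channels (nth [::] C d')) ->
  forall m, d.+1 + m <= size C -> run_prefix C (d.+1 + m) x k = run_prefix C d.+1 x k.
Proof.
move=> H; elim=> [|m IH] hm; first by rewrite addn0.
rewrite addnS run_S; last by lia.
rewrite apply_nohit; first by apply: IH; lia.
by apply: H; lia.
Qed.

Theorem corollary1 (n : nat) (C : network n) (d : nat) (i j : 'I_n) :
  sorting_network C ->
  no_redundant C ->
  d < size C ->
  (i, j) \in nth [::] C d ->
  i.+1 < j ->
  exists d', d < d' < size C /\ (used_in C d' i || used_in C d' j).
Proof.
move=> [wfC sortC] nored hd hin hij.
case: (boolP [exists d' : 'I_(size C), (d < d') && (used_in C d' i || used_in C d' j)]).
  by move/existsP => [d' /andP [h1 h2]]; exists d'; rewrite h1 ltn_ord h2.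
move/existsPn => H.
have NH : forall k, (k = i \/ k = j) ->
    forall d', d < d' < size C -> k \notin channels (nth [::] C d').
  move=> k hk d' /andP [h1 h2]; have := H (Ordinal h2); rewrite /= h1 /= /used_in.
  by case: hk => ->; rewrite negb_or => /andP [].
have wfL := wf_nth wfC hd.
pose Y := fun x => run_prefix C d x.
pose O := fun x => output C x.
have eqO : forall k, (k = i \/ k = j) -> forall x, O x k = apply_layer (nth [::] C d) (Y x) k.
  move=> k hk x; rewrite /O /output -(subnKC hd) (untouched _ (NH k hk)) ?(subnKC hd) //.
  by rewrite run_S.
have hOi : forall x, O x i = Y x i && Y x j.
  by move=> x; rewrite eqO; [exact: (apply_c1 (c := (i, j))) | left].
have hOj : forall x, O x j = Y x i || Y x j.
  by move=> x; rewrite eqO; [exact: (apply_c2 (c := (i, j))) | right].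
have hY : forall x x', step1 x x' -> step1 (Y x) (Y x').
  by move=> x x' h; apply: foldl_step1 => //; apply: all_take_wf.
have hO : forall x x', step1 x x' -> step1 (O x) (O x').
  by move=> x x' h; apply: foldl_step1 => //; apply: all_take_wf.
have hYs : forall s, sorted_vec s -> forall k, Y s k = s k.
  by move=> s ss k; rewrite /Y /run_prefix foldl_sorted //; apply: all_take_wf.
have nP := no_P hY hO sortC hOi hOj hYs hij.
exfalso; apply: (nored d (i, j) hd hin) => x.
apply: NNPP => nle; apply: (nP x).
rewrite /P /Y; move: nle; case: (run_prefix C d x i); case: (run_prefix C d x j) => // nle; exfalso; exact: nle.
Qed.
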